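(* Let $\mathcal{G}$ be a non-trivial hereditary graph class. Then there exists a graph $Z$ such that (1) $Z$ is a block-graph, (2) $Z\notin\mathcal{B}(\mathcal{G})$, and (3) for every $v\in V(Z)$, $Z\setminus v\in\mathcal{B}(\mathcal{G})$.
   Context: All graphs are finite, simple and undirected. A graph is biconnected if every two of its vertices lie on a common cycle. A block of $G$ is an isolated vertex, a bridge (an edge whose removal increases the number of components, with its endpoints), or a maximal biconnected subgraph; $G$ is a block-graph if its only block is $G$ itself. A class is hereditary if closed under induced subgraphs, and non-trivial if it contains at least one non-empty graph and is not the class of all graphs. $\mathcal{B}(\mathcal{G})$ is the class of graphs all of whose blocks belong to $\mathcal{G}$. *)

(* Defs.v *)
From mathcomp Require Import all_boot.
Set Implicit Arguments. Unset Strict Implicit. Unset Printing Implicit Defensive.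

Record graph := Graph {
  vert :> finType;
  adj : rel vert;
  adj_sym : symmetric adj;
  adj_irr : irreflexive adj }.

Section Induced.
Variables (G : graph) (S : {set vert G}).
Definition ind_vert : finType := {x : vert G | x \in S}.
Definition ind_adj : rel ind_vert := fun x y => adj (val x) (val y).
Lemma ind_adj_sym : symmetric ind_adj.
Proof. by move=> x y; rewrite /ind_adj adj_sym. Qed.
Lemma ind_adj_irr : irreflexive ind_adj.
Proof. by move=> x; rewrite /ind_adj adj_irr. Qed.
Definition induced : graph := Graph ind_adj_sym ind_adj_irr.
End Induced.
Arguments induced : clear implicits.

Definition isomorphic (G H : graph) : Prop :=
  exists f : vert G -> vert H, bijective f /\ forall x y, adj (f x) (f y) = adj x y.

Definition graph_class := graph -> Prop.

Definition hereditary (C : graph_class) : Prop :=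
  forall (G H : graph) (S : {set vert G}), C G -> isomorphic H (induced G S) -> C H.

Definition nontrivial (C : graph_class) : Prop :=
  (exists G : graph, C G /\ 0 < #|vert G|) /\ (exists G : graph, ~ C G).

Definition ncomp (T : finType) (e : rel T) : nat := n_comp (connect e) T.

Definition del_edge (G : graph) (u v : vert G) : rel (vert G) :=
  fun x y => adj x y && ~~ (((x == u) && (y == v)) || ((x == v) && (y == u))).

Definition isolated (G : graph) (v : vert G) : Prop := forall w, ~~ adj v w.

Definition bridge (G : graph) (u v : vert G) : Prop :=
  adj u v /\ ncomp (adj (g:=G)) < ncomp (del_edge u v).

Definition cycle_in (G : graph) (S : {set vert G}) (c : seq (vert G)) : bool :=
  [&& cycle (adj (g:=G)) c, uniq c, 3 <= size c & all (fun x => x \in S) c].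

Definition biconnected (G : graph) (S : {set vert G}) : Prop :=
  forall u v, u \in S -> v \in S -> u != v ->
    exists c, cycle_in S c /\ u \in c /\ v \in c.

Definition is_block (G : graph) (S : {set vert G}) : Prop :=
  (exists v, S = [set v] /\ isolated v) \/
  (exists u v, S = [set u; v] /\ bridge u v) \/
  (3 <= #|S| /\ biconnected S /\
     forall S' : {set vert G}, S \proper S' -> ~ biconnected S').

Definition block_graph (G : graph) : Prop :=
  forall S : {set vert G}, is_block S <-> S = setT.

Definition blocks_in (C : graph_class) (G : graph) : Prop :=
  forall S : {set vert G}, is_block S -> C (induced G S).

Definition del_vertex (G : graph) (v : vert G) : graph := induced G [set~ v].

(* Main.v *)
Require Import Defs.
From mathcomp Require Import all_boot.
From Stdlib Require Import Classical.
Set Warnings "-notation-overridden".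
Set Implicit Arguments. Unset Strict Implicit. Unset Printing Implicit Defensive.

Lemma iso_trans G H K : isomorphic G H -> isomorphic H K -> isomorphic G K.
Proof.
move=> [f [bf hf]] [g [bg hg]]; exists (g \o f); split; first exact: bij_comp.
by move=> x y /=; rewrite hg hf.
Qed.

Lemma iso_full G : isomorphic G (induced G setT).
Proof.
exists (fun x => (Sub x (in_setT x) : vert (induced G setT))); split.
  exists val => x; first by rewrite SubK.
  by apply: val_inj; rewrite SubK.
by move=> x y.
Qed.

Lemma closed_iso C : hereditary C -> forall G H, C G -> isomorphic H G -> C H.
Proof.
move=> hC G H CG iso; apply: (hC G H setT CG); exact: iso_trans iso (iso_full G).
Qed.

Lemma del_edgeC (G : graph) (u v : G) : del_edge u v =2 del_edge v u.
Proof. by move=> x y; rewrite /del_edge orbC. Qed.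

Lemma del_sym (G : graph) (u v : G) : symmetric (del_edge u v).
Proof.
move=> x y; rewrite /del_edge adj_sym; congr (_ && ~~ _); rewrite orbC.
by congr (_ || _); apply: andbC.
Qed.

Lemma path_del (G : graph) (x y a : G) q :
  path (adj (g:=G)) x (a :: rcons q y) -> x != a -> x \notin q -> x != y -> a != y ->
  path (del_edge x y) x (a :: rcons q y).
Proof.
move=> /= /andP[xa p] xna xq xy ay.
rewrite /del_edge xa eqxx (negbTE ay) (negbTE xy) /=.
apply: (@sub_in_path _ (predC1 x)) p.
  move=> z w; rewrite !inE => zP wP zw.
  by rewrite zw (negbTE zP) (negbTE wP) andbF.
rewrite /= all_rcons !inE eq_sym xna eq_sym xy /=.
by apply/allP => z zq; rewrite !inE; apply: contraNneq xq => <-.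
Qed.

Lemma cycle_conn (G : graph) (c : seq G) (u v : G) :
  cycle (adj (g:=G)) c -> uniq c -> 3 <= size c -> u \in c -> v \in c -> u != v ->
  connect (del_edge u v) u v.
Proof.
move=> cc uc sc uin vin uv.
case/rot_to: uin => i p rip.
have cc' : cycle (adj (g:=G)) (u :: p) by rewrite -rip rot_cycle.
have uc' : uniq (u :: p) by rewrite -rip rot_uniq.
have sc' : 3 <= size (u :: p) by rewrite -rip size_rot.
have vp : v \in p.
  have : v \in u :: p by rewrite -rip mem_rot.
  by rewrite inE eq_sym (negbTE uv).
case/splitPr: vp cc' uc' sc' => p1 p2 /= cc' uc' sc'.
move: cc'; rewrite rcons_cat /= -cat_rcons cat_path last_rcons => /andP[pa pb].
move: uc'; rewrite /= mem_cat cat_uniq /= inE !negb_or.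
move=> /and5P[/and3P[up1 _ up2] _ /andP[vp1 _] hv _].
case: p1 pa up1 vp1 sc' hv => [|a q] pa up1 vp1 sc' hv.
  case: p2 pb up2 sc' hv => [|b q] pb up2 sc' hv //.
  have cvu : connect (del_edge v u) v u.
    apply/connectP; exists (rcons (b :: q) u); last by rewrite last_rcons.
    apply: path_del => //.
    - by apply: contraNneq hv => ->; rewrite /= inE eqxx ?orbT.
    - by apply: contra hv => h; rewrite /= inE h ?orbT.
    - by rewrite eq_sym.
    - by apply: contraNneq up2 => ->; rewrite inE eqxx.
  rewrite (eq_connect (del_edgeC u v)).
  by rewrite (sym_connect_sym (del_sym v u)).
apply/connectP; exists (rcons (a :: q) v); last by rewrite last_rcons.
apply: path_del => //.
- by apply: contraNneq up1 => ->; rewrite inE eqxx.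
- by apply: contra up1 => h; rewrite inE h ?orbT.
- by apply: contraNneq vp1 => <-; rewrite inE eqxx.
Qed.

Lemma conn_same (G : graph) (u v : G) : connect (del_edge u v) u v ->
  ncomp (adj (g:=G)) = ncomp (del_edge u v).
Proof.
move=> cuv; rewrite /ncomp; apply: eq_n_comp; apply: eq_connect => x y.
apply/idP/idP; last first.
  by apply: connect_sub => a b; rewrite /del_edge => /andP[h _]; apply: connect1.
apply: connect_sub => a b hab.
case E: ((a == u) && (b == v) || (a == v) && (b == u)).
  case/orP: E => /andP[/eqP -> /eqP ->] //.
  by rewrite (sym_connect_sym (del_sym u v)).
by apply: connect1; rewrite /del_edge hab E.
Qed.

Lemma bg1 (G : graph) : #|G| = 1 -> block_graph G.
Proof.
move=> c1.
have all_eq : forall x y : G, x = y.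
  move=> x y; have /fintype_le1P h : #|G| <= 1 by rewrite c1.
  by rewrite (h x y).
have /card_gt0P[x0 _] : 0 < #|G| by rewrite c1.
move=> S; split.
- case=> [[w [-> _]] | [[a [b [_ [hab _]]]] | [h3 _]]].
  + by apply/setP=> y; rewrite !inE (all_eq y w) eqxx.
  + by rewrite (all_eq a b) adj_irr in hab.
  + by have := leq_trans h3 (max_card (mem S)); rewrite c1.
- move=> ->; left; exists x0; split.
  + by apply/setP=> y; rewrite !inE (all_eq y x0) eqxx.
  + by move=> w; rewrite (all_eq w x0) adj_irr.
Qed.

Lemma del_noconn (G : graph) (u v : G) : #|G| = 2 -> u != v ->
  ~~ connect (connect (del_edge u v)) u v.
Proof.
move=> c2 uv.
have pairT : forall a b : G, a != b -> [set a; b] = setT.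
  move=> a b ab; apply/eqP; rewrite eqEcard subsetT cardsT cards2 ab c2 //.
have nod : forall x y, del_edge u v x y = false.
  move=> x y; rewrite /del_edge; case: (eqVneq x y) => [->|xy]; first by rewrite adj_irr.
  have : x \in [set u; v] by rewrite pairT.
  have : y \in [set u; v] by rewrite pairT.
  by rewrite !inE => /orP[]/eqP-> /orP[]/eqP->; rewrite ?adj_irr ?eqxx /= ?orbT ?andbF.
apply/negP => /(connect_sub (e' := del_edge u v) (fun a b h => h)) /connectP[p].
case: p => [_ /= e|a p /= /andP[]]; last by rewrite nod.
by rewrite e eqxx in uv.
Qed.

Lemma bg2 (G : graph) (u v : G) : #|G| = 2 -> adj u v -> block_graph G.
Proof.
move=> c2 huv.
have uv : u != v by apply: contraTneq huv => ->; rewrite adj_irr.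
have pairT : forall a b : G, a != b -> [set a; b] = setT.
  move=> a b ab; apply/eqP; rewrite eqEcard subsetT cardsT cards2 ab c2 //.
have two : forall x : G, (x == u) || (x == v).
  move=> x; have : x \in [set u; v] by rewrite pairT // inE.
  by rewrite !inE.
move=> S; split.
- case=> [[w [-> iw]] | [[a [b [-> [hab _]]]] | [h3 _]]].
  + case/orP: (two w) => /eqP ew.
      by have := iw v; rewrite ew huv.
    by have := iw u; rewrite ew adj_sym huv.
  + by apply: pairT; apply: contraTneq hab => ->; rewrite adj_irr.
  + by have := leq_trans h3 (max_card (mem S)); rewrite c2.
- move=> ->; right; left; exists u, v; split; first by rewrite pairT.
  split => //.
  have sa2 := sym_connect_sym (sym_connect_sym (@adj_sym G)).
  have sd2 := sym_connect_sym (sym_connect_sym (del_sym u v)).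
  have allin : forall e : rel G, connect_sym e ->
     (mem G) =i closure e (pred2 u v).
    move=> e se x; apply/idP/idP => _ //; apply: mem_closure; exact: two.
  rewrite /ncomp (eq_n_comp_r (allin _ sa2)) (eq_n_comp_r (allin _ sd2)).
  rewrite !n_comp_closure2 // (del_noconn c2 uv).
  by rewrite connect1 // connect1.
Qed.

Lemma bg3 (G : graph) : 3 <= #|G| -> biconnected [set: G] -> block_graph G.
Proof.
move=> c3 hbic S; split.
- case=> [[w [-> iw]] | [[a [b [-> [hab hlt]]]] | [h3 [bS hmax]]]].
  + have : 0 < #|[set~ w]| by rewrite cardsC1 -ltnS prednK // (leq_trans _ c3).
    case/card_gt0P => x; rewrite !inE => xw.
    have wx : w != x by rewrite eq_sym.
    have [c [hc [wc _]]] := hbic w x (in_setT _) (in_setT _) wx.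
    case/and4P: hc => cc _ _ _.
    by have := iw (next c w); rewrite (next_cycle cc wc).
  + have ab : a != b by apply: contraTneq hab => ->; rewrite adj_irr.
    have [c [hc [ac bc]]] := hbic a b (in_setT _) (in_setT _) ab.
    case/and4P: hc => cc uc sc _.
    by rewrite (conn_same (cycle_conn cc uc sc ac bc ab)) ltnn in hlt.
  + case: (eqVneq S setT) => // hne; exfalso.
    by apply: (hmax setT _ hbic); rewrite properT hne.
- move=> ->; right; right; split; first by rewrite cardsT.
  by split => // S' /properP [_ [x _]]; rewrite inE.
Qed.

Lemma card_ind (G : graph) (S : {set G}) : #|induced G S| = #|S|.
Proof. by rewrite card_sig; apply: eq_card => x; rewrite !inE. Qed.

Lemma bic_ind (G : graph) (S : {set G}) : biconnected S -> biconnected [set: induced G S].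
Proof.
move=> hb u w _ _ uw.
have vuw : val u != val w by rewrite (inj_eq val_inj).
have [c [hc [uc wc]]] := hb _ _ (valP u) (valP w) vuw.
case/and4P: hc => cc unc sc ac.
have mc : map val (pmap insub c : seq (induced G S)) = c.
  elim: c {cc unc sc uc wc} ac => // x s IH /= /andP[xS sS].
  by case: insubP => [y _ vy | /negP //] /=; rewrite vy IH.
exists (pmap insub c); split; last by rewrite -!(mem_map val_inj) mc.
apply/and4P; split.
- by move: cc; rewrite -{1}mc cycle_map.
- by rewrite -(map_inj_uniq val_inj) mc.
- by rewrite -(size_map val) mc.
- by apply/allP => x _; exact: in_setT.
Qed.

Lemma block_ind (G : graph) (S : {set G}) : is_block S -> block_graph (induced G S).
Proof.
case=> [[v [-> _]] | [[u [v [-> [huv _]]]] | [h3 [hb _]]]].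
- by apply: bg1; rewrite card_ind cards1.
- have uv : u != v by apply: contraTneq huv => ->; rewrite adj_irr.
  have ui : u \in [set u; v] by rewrite !inE eqxx.
  have vi : v \in [set u; v] by rewrite !inE eqxx orbT.
  apply: (@bg2 _ (Sub u ui : vert (induced G [set u; v])) (Sub v vi)).
    by rewrite card_ind cards2 uv.
  exact: huv.
- by apply: bg3; [rewrite card_ind | exact: bic_ind].
Qed.


Section Apex.
Variable H : graph.
Definition apT : finType := (vert H + 'I_3)%type.
Definition ap_adj (x y : apT) : bool :=
  match x, y with
  | inl a, inl b => adj a b
  | inr i, inr j => i != j
  | _, _ => true
  end.
Lemma ap_sym : symmetric ap_adj.
Proof. case=> [a|i] [b|j] /=. exact: adj_sym. by []. by []. by rewrite eq_sym. Qed.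
Lemma ap_irr : irreflexive ap_adj.
Proof. case=> [a|i] /=. exact: adj_irr. by rewrite eqxx. Qed.
Definition apex : graph := Graph ap_sym ap_irr.

Definition apS : {set apex} := inl @: [set: H].

Lemma apex_iso : isomorphic H (induced apex apS).
Proof.
have hin : forall a : H, (inl a : apex) \in apS by move=> a; apply: imset_f.
exists (fun a => (Sub (inl a : apex) (hin a) : vert (induced apex apS))); split.
  apply: inj_card_bij.
    by move=> a b /(congr1 val); rewrite !SubK => -[].
  rewrite card_ind card_imset ?cardsT //.
  by move=> a b [].
by move=> x y.
Qed.

Lemma apex_card : 3 <= #|apex|.
Proof. by rewrite card_sum card_ord leq_addl. Qed.
End Apex.

Definition o0 : 'I_3 := @Ordinal 3 0 isT.
Definition o1 : 'I_3 := @Ordinal 3 1 isT.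
Definition o2 : 'I_3 := @Ordinal 3 2 isT.

Lemma tri_in (H : graph) (z : H) (i j : 'I_3) : i != j ->
  cycle_in [set: apex H] [:: inl z; inr i; inr j].
Proof.
move=> ij; apply/and4P; split => //.
- by rewrite /= ij.
- by rewrite /= !inE /= ij.
- by apply/allP => x _; exact: in_setT.
Qed.

Lemma apex_bic (H : graph) : biconnected [set: apex H].
Proof.
have nx : forall j : 'I_3, exists k, j != k.
  by move=> j; case: (eqVneq j o0) => [->|h]; [exists o1 | exists o0].
move=> u w _ _.
case: u w => [a|i] [b|j] uw.
- have ab : a != b by apply: contraNneq uw => ->.
  exists [:: inl a; inr o0; inl b; inr o1]; split; last by split; rewrite !inE eqxx ?orbT.
  apply/and4P; split => //.
  + by rewrite /= !inE /= ?orbF ?andbT.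
  + by apply/allP => x _; exact: in_setT.
- have [k jk] := nx j.
  exists [:: inl a; inr j; inr k]; split; first exact: tri_in.
  by split; rewrite !inE eqxx ?orbT.
- have [k ik] := nx i.
  exists [:: inl b; inr i; inr k]; split; first exact: tri_in.
  by split; rewrite !inE eqxx ?orbT.
- exists [:: inr o0; inr o1; inr o2 : apex H]; split.
    by apply/and4P; split => //; apply/allP => x _; exact: in_setT.
  by case: i {uw} => [[|[|[|//]]] hi]; case: j => [[|[|[|//]]] hj].
Qed.

Lemma minP (P : nat -> Prop) : (exists n, P n) -> exists n, P n /\ forall m, m < n -> ~ P m.
Proof.
move=> [n Pn]; apply: NNPP => hno.
suff : forall k m, m < k -> ~ P m by move/(_ n.+1 n (ltnSn n)).
elim=> [|k IH] m // hm Pm.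
rewrite ltnS leq_eqVlt in hm; case/orP: hm => [/eqP em | lt]; last exact: IH m lt Pm.
by apply: hno; exists k; split; [rewrite -em | exact: IH].
Qed.

Theorem lemma3 (C : graph_class) :
  hereditary C -> nontrivial C ->
  exists Z : graph,
    block_graph Z /\ ~ blocks_in C Z /\
    (forall v : vert Z, blocks_in C (del_vertex v)).
Proof.
move=> hC [_ [H nH]].
have nA : ~ C (apex H) by move=> CA; apply: nH; exact: (hC _ _ _ CA (@apex_iso H)).
have bA : block_graph (apex H) := bg3 (@apex_card H) (@apex_bic H).
pose P n := exists Z : graph, #|Z| = n /\ block_graph Z /\ ~ C Z.
have [n [[Z [cZ [bZ nZ]]] hmin]] : exists n, P n /\ forall m, m < n -> ~ P m.
  by apply: minP; exists #|apex H|, (apex H).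
exists Z; split => //; split.
  move=> hb; apply: nZ; apply: (closed_iso hC (hb setT _)); last exact: iso_full.
  by apply/(bZ setT).
move=> v S hS; apply: NNPP => nC.
apply: (hmin #|induced (del_vertex v) S|).
  rewrite card_ind; apply: (leq_ltn_trans (max_card (mem S))).
  rewrite /del_vertex card_ind cardsC1 -cZ ltn_predL.
  by apply/card_gt0P; exists v.
exists (induced (del_vertex v) S); split => //; split => //; exact: block_ind.
Qed.
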